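(* If $\bar c>q\sigma^2/(2\mu)$, there exists a unique $\bar z>0$ such that $\partial_xb_0(\bar z,\bar c)=0$. Moreover $\partial_xb_0(x,\bar c)<0$ for $x\in(0,\bar z)$ (and $\lim_{x\to0^+}\partial_xb_0(x,\bar c)<0$), $\partial_xb_0(x,\bar c)>0$ for $x\in(\bar z,\infty)$, and $\partial_{xx}b_0(\bar z,\bar c)>0$.
   Context: Fix constants $\mu>0$, $\sigma>0$, $q>0$. For $c\ge0$, $\theta_1(c)=\frac{c-\mu+\sqrt{(c-\mu)^2+2q\sigma^2}}{\sigma^2}>0$, $\theta_2(c)=\frac{c-\mu-\sqrt{(c-\mu)^2+2q\sigma^2}}{\sigma^2}<0$, with $\theta_2'$ its derivative. For $x>0$, $b_0(x,c)=\dfrac{-\frac1q(1-e^{\theta_2(c)x})+\frac cq\theta_2'(c)e^{\theta_2(c)x}x}{e^{\theta_1(c)x}-e^{\theta_2(c)x}}$. *)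

(* Defs.v *)
From Stdlib Require Import Reals.
From Coquelicot Require Import Coquelicot.
Open Scope R_scope.

Definition theta1 (mu sigma q c : R) : R :=
  (c - mu + sqrt ((c - mu)^2 + 2 * q * sigma^2)) / sigma^2.

Definition theta2 (mu sigma q c : R) : R :=
  (c - mu - sqrt ((c - mu)^2 + 2 * q * sigma^2)) / sigma^2.

Definition theta2' (mu sigma q c : R) : R :=
  Derive (fun c' => theta2 mu sigma q c') c.

Definition b0 (mu sigma q x c : R) : R :=
  (- (1 / q) * (1 - exp (theta2 mu sigma q c * x))
   + (c / q) * theta2' mu sigma q c * exp (theta2 mu sigma q c * x) * x)
  / (exp (theta1 mu sigma q c * x) - exp (theta2 mu sigma q c * x)).

Definition dxb0 (mu sigma q x c : R) : R :=
  Derive (fun y => b0 mu sigma q y c) x.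

Definition dxxb0 (mu sigma q x c : R) : R :=
  Derive_n (fun y => b0 mu sigma q y c) 2 x.

(* Main.v *)
Require Import Defs.
From Stdlib Require Import Reals Lra Psatz.
From Coquelicot Require Import Coquelicot.
Open Scope R_scope.

Lemma mvt_open (f df : R -> R) x y :
  (forall t, is_derive f t (df t)) -> x < y ->
  exists c, f y - f x = df c * (y - x) /\ x < c < y.
Proof.
  intros Hd Hxy. apply MVT_cor2; auto.
  intros c _. apply is_derive_Reals, Hd.
Qed.

Lemma incr_lt (f df : R -> R) x y :
  (forall t, is_derive f t (df t)) -> (forall t, x < t < y -> 0 < df t) ->
  x < y -> f x < f y.
Proof.
  intros Hd Hp Hxy. destruct (mvt_open f df x y Hd Hxy) as [c [E Hc]].
  specialize (Hp c Hc). nra.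
Qed.

Lemma decr_lt (f df : R -> R) x y :
  (forall t, is_derive f t (df t)) -> (forall t, x < t < y -> df t < 0) ->
  x < y -> f y < f x.
Proof.
  intros Hd Hp Hxy. destruct (mvt_open f df x y Hd Hxy) as [c [E Hc]].
  specialize (Hp c Hc). nra.
Qed.

Lemma der_cont (f df : R -> R) :
  (forall t, is_derive f t (df t)) -> continuity f.
Proof.
  intros Hd x. apply continuity_pt_filterlim.
  apply (ex_derive_continuous (V:=R_NormedModule) f x). exists (df x). apply Hd.
Qed.

Lemma L0 (f df : R -> R) M :
  (forall t, is_derive f t (df t)) -> (forall t, 0 < t -> 0 < df t) ->
  f 0 < 0 -> 0 < M -> 0 < f M ->
  exists r, 0 < r /\ f r = 0 /\ (forall x, 0 <= x < r -> f x < 0) /\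
            (forall x, r < x -> 0 < f x).
Proof.
  intros Hd Hp H0 HM HfM.
  destruct (IVT f 0 M (der_cont f df Hd) HM H0 HfM) as [r [Hr Er]].
  assert (0 < r). { destruct (Req_dec r 0) as [->|]; [lra|lra]. }
  exists r. repeat split; auto.
  - intros x Hx. rewrite <- Er. apply (incr_lt f df); [exact Hd| |lra].
    intros t Ht; apply Hp; lra.
  - intros x Hx. rewrite <- Er. apply (incr_lt f df); [exact Hd| |lra].
    intros t Ht; apply Hp; lra.
Qed.

Lemma L1 (f df : R -> R) r M :
  (forall t, is_derive f t (df t)) -> 0 < r -> f 0 = 0 ->
  (forall x, 0 < x < r -> df x < 0) -> (forall x, r < x -> 0 < df x) ->
  r < M -> 0 < f M ->
  exists z, r < z /\ f z = 0 /\ (forall x, 0 < x < z -> f x < 0) /\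
            (forall x, z < x -> 0 < f x).
Proof.
  intros Hd Hr H0 Hn Hp HM HfM.
  assert (Hle : forall x, 0 < x <= r -> f x < 0).
  { intros x Hx. rewrite <- H0. apply (decr_lt f df); [exact Hd| |lra].
    intros t Ht; apply Hn; lra. }
  assert (Hfr : f r < 0) by (apply Hle; lra).
  destruct (IVT f r M (der_cont f df Hd) HM Hfr HfM) as [z [Hz Ez]].
  assert (r < z). { destruct (Req_dec r z) as [<-|]; [lra|lra]. }
  exists z. repeat split; auto.
  - intros x Hx. destruct (Rle_lt_dec x r). apply Hle; lra.
    rewrite <- Ez. apply (incr_lt f df); [exact Hd| |lra].
    intros t Ht; apply Hp; lra.
  - intros x Hx. rewrite <- Ez. apply (incr_lt f df); [exact Hd| |lra].
    intros t Ht; apply Hp; lra.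
Qed.

Lemma der_lin (g dg : R -> R) L :
  (forall t, is_derive g t (dg t)) ->
  forall t, is_derive (fun s => g s - L * s) t (dg t - L).
Proof.
  intros D t. apply (is_derive_minus g (fun s => L * s) t (dg t) L).
  apply D. auto_derive; auto; ring.
Qed.

Lemma der_quad (g dg : R -> R) L :
  (forall t, is_derive g t (dg t)) ->
  forall t, is_derive (fun s => g s - L * s^2 / 2) t (dg t - L * t).
Proof.
  intros D t. apply (is_derive_minus g (fun s => L * s^2/2) t (dg t) (L*t)).
  apply D. auto_derive; auto; field.
Qed.

Lemma taylor_up (f f1 f2 : R -> R) L x :
  (forall t, is_derive f t (f1 t)) -> (forall t, is_derive f1 t (f2 t)) ->
  f 0 = 0 -> f1 0 = 0 -> 0 < x -> (forall t, 0 < t < x -> f2 t < L) ->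
  f x < L * x^2 / 2.
Proof.
  intros D1 D2 H0 H1 Hx Hb.
  assert (E1 : forall t, 0 < t <= x -> f1 t - L * t < 0).
  { intros t Ht.
    pose proof (decr_lt _ _ 0 t (der_lin f1 f2 L D2)) as K.
    simpl in K. rewrite H1 in K.
    replace 0 with (0 - L * 0) by ring. apply K; [|lra].
    intros s Hs. specialize (Hb s ltac:(lra)). lra. }
  pose proof (decr_lt _ _ 0 x (der_quad f f1 L D1)) as K.
  simpl in K. rewrite H0 in K.
  assert (f x - L * x^2/2 < 0 - L * 0^2/2); [|lra].
  apply K; [|lra]. intros s Hs. apply E1. lra.
Qed.

Lemma taylor_lo (f f1 f2 : R -> R) L x :
  (forall t, is_derive f t (f1 t)) -> (forall t, is_derive f1 t (f2 t)) ->
  f 0 = 0 -> f1 0 = 0 -> 0 < x -> (forall t, 0 < t < x -> L < f2 t) ->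
  L * x^2 / 2 < f x.
Proof.
  intros D1 D2 H0 H1 Hx Hb.
  assert (- f x < (-L) * x^2/2); [|lra].
  apply (taylor_up (fun s => - f s) (fun s => - f1 s) (fun s => - f2 s)).
  - intros t. apply (is_derive_opp f t (f1 t)), D1.
  - intros t. apply (is_derive_opp f1 t (f2 t)), D2.
  - rewrite H0; ring.
  - rewrite H1; ring.
  - auto.
  - intros t Ht. specialize (Hb t Ht). lra.
Qed.
Lemma LimR (F : R -> R) l :
  (forall eps, 0 < eps -> exists del, 0 < del /\ forall x, 0 < x < del -> Rabs (F x - l) < eps) ->
  filterlim F (at_right 0) (locally l).
Proof.
  intros H. apply filterlim_locally. intros eps.
  destruct (H eps (cond_pos eps)) as [del [Hd Hx]].
  exists (mkposreal del Hd). intros y Hy Hy0.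
  change (Rabs (F y - l) < eps). apply Hx. split; auto.
  change (Rabs (y - 0) < del) in Hy. apply Rabs_lt_between in Hy. lra.
Qed.

Lemma exp_sub u v : exp (u - v) = exp u / exp v.
Proof. unfold Rminus, Rdiv. rewrite exp_plus, exp_Ropp. reflexivity. Qed.

Section S.
Variables a b q k : R.
Definition hh x := k - (a-b)/q - k*(a-b)*x - k*exp(b*x - a*x) + a/q*exp(-(b*x)) - b/q*exp(-(a*x)).
Definition h1 x := -k*(a-b) + k*(a-b)*exp(b*x-a*x) - a*b/q*exp(-(b*x)) + a*b/q*exp(-(a*x)).
Definition h2 x := -k*(a-b)^2*exp(b*x-a*x) + a*b^2/q*exp(-(b*x)) - a^2*b/q*exp(-(a*x)).
Definition uu x := -k*(a-b)^2*exp(b*x) + a*b^2/q*exp(a*x-b*x) - a^2*b/q.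
Definition u1 x := -k*(a-b)^2*b*exp(b*x) + a*b^2/q*(a-b)*exp(a*x-b*x).

Hypothesis Hq : 0 < q.

Lemma d_hh x : is_derive hh x (h1 x).
Proof. unfold hh, h1. auto_derive; [auto|]. unfold Rminus. field. lra. Qed.
Lemma d_h1 x : is_derive h1 x (h2 x).
Proof. unfold h1, h2. auto_derive; [auto|]. unfold Rminus. field. lra. Qed.
Lemma d_uu x : is_derive uu x (u1 x).
Proof. unfold uu, u1. auto_derive; [auto|]. unfold Rminus. field. lra. Qed.

Lemma uu_h2 x : uu x = h2 x * exp (a*x).
Proof.
  unfold uu, h2. rewrite !exp_sub, !exp_Ropp.
  pose proof (exp_pos (a*x)). pose proof (exp_pos (b*x)).
  field. lra.
Qed.
End S.

Section T.
Variables a b q k : R.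
Hypothesis Hq : 0 < q.
Hypothesis Ha : 0 < a.
Hypothesis Hb : b < 0.
Hypothesis Hk : 0 < k.
Hypothesis Hkey : -(a*b)/q < k*(a-b).
Let Hb2 : 0 < b^2. Proof. apply pow2_gt_0; lra. Qed.
Let Hd2 : 0 < (a-b)^2. Proof. apply pow2_gt_0; lra. Qed.
Let Hab2 : 0 < a*b^2. Proof. apply Rmult_lt_0_compat; lra. Qed.
Let Hiq : 0 < /q. Proof. apply Rinv_0_lt_compat; lra. Qed.

Lemma u1_pos t : 0 < u1 a b q k t.
Proof.
  unfold u1. pose proof (exp_pos (b*t)). pose proof (exp_pos (a*t-b*t)).
  assert (0 < a*b^2/q*(a-b)). { apply Rmult_lt_0_compat; [|lra].
    unfold Rdiv. apply Rmult_lt_0_compat; [exact Hab2| exact Hiq]. }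
  assert (0 < -k*(a-b)^2*b).
  { replace (-k*(a-b)^2*b) with ((k*(a-b)^2)*(-b)) by ring.
    apply Rmult_lt_0_compat; [apply Rmult_lt_0_compat|]; lra. }
  pose proof (Rmult_lt_0_compat _ _ H2 H). pose proof (Rmult_lt_0_compat _ _ H1 H0). lra.
Qed.

Lemma uu0 : uu a b q k 0 < 0.
Proof.
  unfold uu. rewrite !Rmult_0_r, Rminus_0_r, exp_0.
  assert (-(a*b)/q = - (a*b/q)) by (field; lra).
  assert (E : a*b^2/q*1 - a^2*b/q = -(a*b)/q*(a-b)) by (field; lra).
  assert (-(a*b)/q*(a-b) < k*(a-b)*(a-b)) by (apply Rmult_lt_compat_r; lra).
  nra.
Qed.

Lemma expgt x : 0 < x -> 1 + x < exp x.
Proof. intros; apply exp_ineq1; lra. Qed.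

Let Hkd : 0 < k*(a-b). Proof. apply Rmult_lt_0_compat; lra. Qed.
Let Hkd2 : 0 < k*(a-b)^2. Proof. apply Rmult_lt_0_compat; lra. Qed.
Let HP : 0 < a*b^2/q. Proof. apply Rmult_lt_0_compat; [exact Hab2| exact Hiq]. Qed.
Let HX0 : 0 < k*(a-b)*q/(a*b^2).
Proof. apply Rmult_lt_0_compat; [apply Rmult_lt_0_compat; lra| apply Rinv_0_lt_compat; lra]. Qed.

Lemma uuM : 0 < uu a b q k (k*(a-b)*q/(a*b^2) + 1).
Proof.
  set (M := k*(a-b)*q/(a*b^2) + 1).
  assert (HM : 1 < M) by (unfold M; lra).
  assert (HdM : 0 < (a-b)*M) by (apply Rmult_lt_0_compat; lra).
  unfold uu. pose proof (expgt (a*M-b*M) ltac:(lra)).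
  assert (exp (b*M) < 1). { rewrite <- exp_0. apply exp_increasing. nra. }
  assert (0 < -(a^2*b/q)).
  { replace (-(a^2*b/q)) with (a^2*(-b)*/q) by (field; lra).
    apply Rmult_lt_0_compat; [apply Rmult_lt_0_compat|]; try lra. apply pow2_gt_0; lra. }
  assert (E : a*b^2/q * ((a-b)*M) = k*(a-b)^2 + a*b^2/q*(a-b)).
  { unfold M. field. split; lra. }
  assert (0 < a*b^2/q*(a-b)) by (apply Rmult_lt_0_compat; lra).
  assert (a*b^2/q*exp (a*M-b*M) > a*b^2/q*((a-b)*M)).
  { apply Rmult_lt_compat_l; auto. replace ((a-b)*M) with (a*M-b*M) by ring. lra. }
  assert (k*(a-b)^2*exp (b*M) < k*(a-b)^2) .
  { rewrite <- (Rmult_1_r (k*(a-b)^2)) at 2. apply Rmult_lt_compat_l; lra. }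
  lra.
Qed.

Lemma h1_0 : h1 a b q k 0 = 0.
Proof. unfold h1. rewrite !Rmult_0_r, Rminus_0_r, Ropp_0, exp_0. field; lra. Qed.
Lemma hh_0 : hh a b q k 0 = 0.
Proof. unfold hh. rewrite !Rmult_0_r, !Rminus_0_r, Ropp_0, exp_0. field; lra. Qed.

Lemma h1_big x : k*(a-b)*q/(a*b^2) + 1 <= x -> 0 < h1 a b q k x.
Proof.
  intros Hx. unfold h1.
  assert (Hx0 : 0 < x) by lra.
  pose proof (exp_pos (b*x-a*x)).
  pose proof (expgt (-(b*x)) ltac:(nra)).
  assert (exp (-(a*x)) < 1). { rewrite <- exp_0. apply exp_increasing. nra. }
  set (c0 := -(a*b)/q).
  assert (Hc0 : 0 < c0). { unfold c0. unfold Rdiv. apply Rmult_lt_0_compat; [nra|lra]. }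
  assert (E : - k * (a - b) + k * (a - b) * exp (b * x - a * x) - a * b / q * exp (- (b * x)) +
    a * b / q * exp (- (a * x)) = - k * (a - b) + k * (a - b) * exp (b * x - a * x) + c0 * (exp (- (b * x)) - exp (- (a * x)))).
  { unfold c0. field. lra. }
  rewrite E.
  assert (c0 * (-(b*x)) < c0 * (exp (- (b * x)) - exp (- (a * x)))).
  { apply Rmult_lt_compat_l; lra. }
  assert (E2 : c0 * (-(b*x)) = a*b^2/q * x) by (unfold c0; field; lra).
  assert (a*b^2/q * (k*(a-b)*q/(a*b^2) + 1) <= a*b^2/q * x).
  { apply Rmult_le_compat_l; lra. }
  assert (E3 : a*b^2/q * (k*(a-b)*q/(a*b^2) + 1) = k*(a-b) + a*b^2/q) by (field; split; lra).
  assert (0 < k * (a - b) * exp (b * x - a * x)) by (apply Rmult_lt_0_compat; lra).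
  lra.
Qed.

Lemma hh_big x : 1 + 4*((a-b)/q + k*(a-b))*q/(a*b^2) <= x -> 0 < hh a b q k x.
Proof.
  intros Hx. set (C := (a-b)/q + k*(a-b)) in *.
  assert (HC : 0 < C). { unfold C. assert (0 < (a-b)/q) by (apply Rmult_lt_0_compat; lra). lra. }
  assert (HC2 : 0 < 4*C*q/(a*b^2)).
  { apply Rmult_lt_0_compat; [apply Rmult_lt_0_compat; lra| apply Rinv_0_lt_compat; lra]. }
  assert (Hx1 : 1 <= x) by lra.
  unfold hh.
  assert (exp (b*x-a*x) < 1). { rewrite <- exp_0. apply exp_increasing. nra. }
  pose proof (exp_pos (-(a*x))).
  set (y := -(b*x)/2).
  assert (Hy : 0 < y) by (unfold y; nra).
  assert (Ey : exp (-(b*x)) = exp y * exp y). { rewrite <- exp_plus. f_equal. unfold y; field. }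
  pose proof (expgt y Hy).
  assert (y*y < exp (-(b*x))). { rewrite Ey. nra. }
  assert (Eyy : y * y = b^2*x^2/4) by (unfold y; field).
  assert (a/q * (b^2*x^2/4) < a/q * exp (-(b*x))).
  { apply Rmult_lt_compat_l; [apply Rmult_lt_0_compat; lra| lra]. }
  assert (E1 : a/q*(b^2*x^2/4) = (a*b^2/(4*q)) * x * x) by (field; lra).
  assert (Hk1 : a*b^2/(4*q) * (4*C*q/(a*b^2)) = C) by (field; split; lra).
  assert (HP4 : 0 < a*b^2/(4*q)). { apply Rmult_lt_0_compat; [lra| apply Rinv_0_lt_compat; lra]. }
  assert (C < a*b^2/(4*q) * x).
  { rewrite <- Hk1. apply Rmult_lt_compat_l; lra. }
  assert (C * x < a*b^2/(4*q) * x * x) by (apply Rmult_lt_compat_r; lra).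
  assert ((a-b)/q + k*(a-b)*x <= C * x).
  { unfold C. assert (0 < (a-b)/q) by (apply Rmult_lt_0_compat; lra). nra. }
  assert (k*exp (b*x-a*x) < k) by (rewrite <- (Rmult_1_r k) at 2; apply Rmult_lt_compat_l; lra).
  assert (0 < -b/q * exp (-(a*x))).
  { apply Rmult_lt_0_compat; [apply Rmult_lt_0_compat; lra| lra]. }
  lra.
Qed.

Lemma hh_shape : exists z, 0 < z /\ hh a b q k z = 0 /\
  (forall x, 0 < x < z -> hh a b q k x < 0) /\ (forall x, z < x -> 0 < hh a b q k x) /\
  0 < h1 a b q k z.
Proof.
  destruct (L0 (uu a b q k) (u1 a b q k) (k*(a-b)*q/(a*b^2) + 1) (d_uu a b q k Hq)
    (fun t _ => u1_pos t) uu0 ltac:(lra) uuM) as [r [Hr [_ [Hn Hp]]]].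
  assert (Hh2 : forall x, h2 a b q k x = uu a b q k x / exp (a*x)).
  { intros x. rewrite uu_h2 by lra. field. apply Rgt_not_eq, exp_pos. }
  destruct (L1 (h1 a b q k) (h2 a b q k) r (r + k*(a-b)*q/(a*b^2) + 1) (d_h1 a b q k Hq) Hr h1_0)
    as [s [Hs [_ [Hn1 Hp1]]]].
  { intros x Hx. rewrite Hh2. apply Rdiv_neg_pos; [apply Hn; lra| apply exp_pos]. }
  { intros x Hx. rewrite Hh2. apply Rdiv_pos_pos; [apply Hp; lra| apply exp_pos]. }
  { lra. }
  { apply h1_big. lra. }
  destruct (L1 (hh a b q k) (h1 a b q k) s (s + 1 + 4*((a-b)/q + k*(a-b))*q/(a*b^2)) (d_hh a b q k Hq) ltac:(lra) hh_0)
    as [z [Hz [Ez [Hn2 Hp2]]]].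
  { intros x Hx. apply Hn1; lra. }
  { auto. }
  { assert (0 < 4*((a-b)/q + k*(a-b))*q/(a*b^2)); [|lra].
    apply Rmult_lt_0_compat; [apply Rmult_lt_0_compat; [|lra]| apply Rinv_0_lt_compat; lra].
    assert (0 < (a-b)/q) by (apply Rmult_lt_0_compat; lra). lra. }
  { apply hh_big. lra. }
  exists z. split; [lra|]. split; [auto|]. split; [auto|]. split; [auto|]. apply Hp1; lra.
Qed.
End T.

Definition B0 a b q c t x :=
  (- (1 / q) * (1 - exp (b * x)) + (c / q) * t * exp (b * x) * x) / (exp (a * x) - exp (b * x)).
Definition PP a b x := exp (a*x+b*x) / (exp (a*x) - exp (b*x))^2.

Lemma Dn_ne a b x : b < a -> x <> 0 -> exp (a*x) - exp (b*x) <> 0.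
Proof.
  intros Hab Hx E. apply Rminus_diag_uniq in E. apply exp_inv in E.
  apply Hx. apply (Rmult_eq_reg_l (a-b)); [|lra]. lra.
Qed.

Lemma d_B0 a b q c t x : 0 < q -> b < a -> x <> 0 ->
  is_derive (B0 a b q c t) x (hh a b q (c*t/q) x * PP a b x).
Proof.
  intros Hq Hab Hx. pose proof (Dn_ne a b x Hab Hx).
  unfold B0, PP, hh. auto_derive; [auto|].
  rewrite !exp_sub, !exp_Ropp, exp_plus.
  pose proof (exp_pos (a*x)). pose proof (exp_pos (b*x)).
  field. repeat split; lra.
Qed.

Lemma cont_eps (f : R -> R) x0 : continuity_pt f x0 ->
  forall eps, 0 < eps -> exists del, 0 < del /\ forall t, Rabs (t - x0) < del -> Rabs (f t - f x0) < eps.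
Proof.
  intros Hc eps He. destruct (Hc eps He) as [del [Hd H]].
  exists del. split; auto. intros t Ht.
  destruct (Req_dec t x0) as [->|Hne].
  - rewrite Rminus_eq_0, Rabs_R0. auto.
  - apply (H t). split. split. constructor. auto. exact Ht.
Qed.

Lemma lim_cont (f : R -> R) : continuity_pt f 0 -> filterlim f (at_right 0) (locally (f 0)).
Proof.
  intros Hc. apply LimR. intros eps He. destruct (cont_eps f 0 Hc eps He) as [del [Hd H]].
  exists del. split; auto. intros x Hx. apply H. rewrite Rminus_0_r, Rabs_pos_eq; lra.
Qed.

Lemma lim_mult (F G : R -> R) l1 l2 :
  filterlim F (at_right 0) (locally l1) -> filterlim G (at_right 0) (locally l2) ->
  filterlim (fun x => F x * G x) (at_right 0) (locally (l1 * l2)).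
Proof.
  intros H1 H2. apply (filterlim_comp_2 F G Rmult H1 H2).
  apply (filterlim_mult (K := R_AbsRing) l1 l2).
Qed.

Lemma lim_comp (F g : R -> R) l : filterlim F (at_right 0) (locally l) -> continuity_pt g l ->
  filterlim (fun x => g (F x)) (at_right 0) (locally (g l)).
Proof.
  intros H1 H2. apply (filterlim_comp _ _ _ F g (at_right 0) (locally l) (locally (g l)) H1).
  apply continuity_pt_filterlim, H2.
Qed.

Section U.
Variables a b q k : R.
Hypothesis Hq : 0 < q.
Hypothesis Ha : 0 < a.
Hypothesis Hb : b < 0.

Lemma lim_hq : filterlim (fun x => hh a b q k x / x^2) (at_right 0) (locally (h2 a b q k 0 / 2)).
Proof.
  apply LimR. intros eps He.
  assert (Hc : continuity_pt (h2 a b q k) 0).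
  { assert (Hd : forall t, is_derive (h2 a b q k) t
       (k*(a-b)^3*exp(b*t-a*t) - a*b^3/q*exp(-(b*t)) + a^3*b/q*exp(-(a*t)))).
    { intros t. unfold h2. auto_derive; [auto|]. unfold Rminus. field. lra. }
    apply (der_cont _ _ Hd). }
  destruct (cont_eps _ 0 Hc eps He) as [del [Hd H]].
  exists del. split; auto. intros x Hx.
  assert (Hb1 : forall t, 0 < t < x -> h2 a b q k t < h2 a b q k 0 + eps).
  { intros t Ht. assert (Rabs (t - 0) < del) by (rewrite Rminus_0_r, Rabs_pos_eq; lra).
    specialize (H t H0). apply Rabs_lt_between in H. lra. }
  assert (Hb2 : forall t, 0 < t < x -> h2 a b q k 0 - eps < h2 a b q k t).
  { intros t Ht. assert (Rabs (t - 0) < del) by (rewrite Rminus_0_r, Rabs_pos_eq; lra).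
    specialize (H t H0). apply Rabs_lt_between in H. lra. }
  pose proof (taylor_up _ _ _ _ x (d_hh a b q k Hq) (d_h1 a b q k Hq) (hh_0 a b q k Hq) (h1_0 a b q k Hq) ltac:(lra) Hb1) as U1.
  pose proof (taylor_lo _ _ _ _ x (d_hh a b q k Hq) (d_h1 a b q k Hq) (hh_0 a b q k Hq) (h1_0 a b q k Hq) ltac:(lra) Hb2) as U2.
  assert (Hx2 : 0 < x^2) by (apply pow2_gt_0; lra).
  set (y := hh a b q k x / x^2).
  assert (Ey : hh a b q k x = y * x^2) by (unfold y; field; lra).
  rewrite Ey in U1, U2.
  assert (y < (h2 a b q k 0 + eps)/2).
  { apply (Rmult_lt_reg_r (x^2)); auto. lra. }
  assert ((h2 a b q k 0 - eps)/2 < y).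
  { apply (Rmult_lt_reg_r (x^2)); auto. lra. }
  apply Rabs_lt_between. lra.
Qed.
End U.

Lemma lim_dq a b : filterlim (fun x => (exp (a*x) - exp (b*x)) / x) (at_right 0) (locally (a - b)).
Proof.
  assert (Hd : derivable_pt_lim (fun x => exp (a*x) - exp (b*x)) 0 (a - b)).
  { apply is_derive_Reals. auto_derive; [auto|]. rewrite !Rmult_0_r, exp_0. ring. }
  apply LimR. intros eps He. destruct (Hd eps He) as [del H].
  exists del. split; [apply cond_pos|]. intros x Hx.
  assert (Hx0 : x <> 0) by lra.
  assert (Rabs x < del) by (rewrite Rabs_pos_eq; lra).
  specialize (H x Hx0 H0). rewrite Rplus_0_l, !Rmult_0_r, exp_0, Rminus_eq_0, Rminus_0_r in H.
  exact H.
Qed.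

Lemma lim_B0 a b q c t : 0 < q -> 0 < a -> b < 0 ->
  filterlim (Derive (B0 a b q c t)) (at_right 0)
    (locally (h2 a b q (c*t/q) 0 / 2 * (exp (a*0+b*0) * / (a-b)^2))).
Proof.
  intros Hq Ha Hb. set (k := c*t/q).
  apply (filterlim_ext_loc (fun x => hh a b q k x / x^2 *
            (exp (a*x+b*x) * / ((exp (a*x) - exp (b*x)) / x)^2))).
  - exists (mkposreal 1 Rlt_0_1). intros x _ Hx. simpl in Hx.
    rewrite (is_derive_unique _ _ _ (d_B0 a b q c t x Hq ltac:(lra) ltac:(lra))).
    unfold PP. pose proof (Dn_ne a b x ltac:(lra) ltac:(lra)). fold k. field. split; lra.
  - apply lim_mult. apply lim_hq; auto.
    apply lim_mult.
    + apply (lim_cont (fun x => exp (a*x+b*x))). apply (der_cont _ (fun x => (a+b)*exp (a*x+b*x))).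
      intros x. auto_derive; auto; ring.
    + apply (lim_comp (fun x => (exp (a*x) - exp (b*x)) / x) (fun y => / y^2)).
      apply lim_dq. apply continuity_pt_filterlim.
      apply (ex_derive_continuous (V:=R_NormedModule) (fun y => / y^2)).
      auto_derive. assert (a - b <> 0) by lra. intros E. apply H. nra.
Qed.

Lemma PP_pos a b x : b < a -> x <> 0 -> 0 < PP a b x.
Proof.
  intros Hab Hx. unfold PP. pose proof (Dn_ne a b x Hab Hx).
  apply Rdiv_pos_pos. apply exp_pos. apply pow2_gt_0; auto.
Qed.

Lemma D2_B0 a b q c t z : 0 < q -> b < a -> 0 < z -> hh a b q (c*t/q) z = 0 ->
  Derive_n (fun y => B0 a b q c t y) 2 z = h1 a b q (c*t/q) z * PP a b z.
Proof.
  intros Hq Hab Hz Eh. set (k := c*t/q) in *. simpl.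
  transitivity (Derive (fun x => hh a b q k x * PP a b x) z).
  - apply Derive_ext_loc. exists (mkposreal z Hz). intros x Hx. simpl in Hx.
    change (Rabs (x - z) < z) in Hx. apply Rabs_lt_between in Hx.
    apply (is_derive_unique (fun y => B0 a b q c t y)). apply d_B0; lra.
  - rewrite Derive_mult.
    + rewrite (is_derive_unique _ _ _ (d_hh a b q k Hq z)), Eh. ring.
    + exists (h1 a b q k z). apply d_hh; auto.
    + unfold PP. auto_derive. pose proof (Dn_ne a b z Hab ltac:(lra)). auto.
Qed.
Lemma th2' mu sigma q c : 0 < sigma -> 0 < q ->
  theta2' mu sigma q c = (1 - (c-mu)/sqrt ((c - mu)^2 + 2 * q * sigma^2))/sigma^2.
Proof.
  intros Hs Hq. unfold theta2'. apply is_derive_unique. unfold theta2.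
  assert (HD : 0 < (c - mu)^2 + 2 * q * sigma^2).
  { assert (0 < sigma^2) by (apply pow2_gt_0; lra). pose proof (pow2_ge_0 (c-mu)). nra. }
  auto_derive.
  - replace ((c + - mu) * ((c + - mu) * 1) + 2 * q * (sigma * (sigma * 1))) with ((c - mu) ^ 2 + 2 * q * sigma ^ 2) by ring. exact HD.
  - replace ((c + - mu) * ((c + - mu) * 1) + 2 * q * (sigma * (sigma * 1))) with ((c - mu) ^ 2 + 2 * q * sigma ^ 2) by ring.
    pose proof (sqrt_lt_R0 _ HD). field. split; lra.
Qed.

Theorem mainTheorem16 (mu sigma q cbar : R)
  (Hmu : 0 < mu) (Hsigma : 0 < sigma) (Hq : 0 < q)
  (Hc : cbar > q * sigma^2 / (2 * mu)) :
  exists zbar : R,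
    0 < zbar /\
    dxb0 mu sigma q zbar cbar = 0 /\
    (forall z : R, 0 < z -> dxb0 mu sigma q z cbar = 0 -> z = zbar) /\
    (forall x : R, 0 < x < zbar -> dxb0 mu sigma q x cbar < 0) /\
    (exists l : R, l < 0 /\
       filterlim (fun x => dxb0 mu sigma q x cbar) (at_right 0) (locally l)) /\
    (forall x : R, zbar < x -> dxb0 mu sigma q x cbar > 0) /\
    dxxb0 mu sigma q zbar cbar > 0.
Proof.
  set (S := sigma^2).
  assert (HS : 0 < S) by (apply pow2_gt_0; lra).
  set (D := (cbar - mu)^2 + 2 * q * S).
  assert (HD : 0 < D). { unfold D. pose proof (pow2_ge_0 (cbar-mu)). nra. }
  set (s := sqrt D).
  assert (Hs : 0 < s) by (apply sqrt_lt_R0; auto).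
  assert (Hss : s * s = D) by (apply sqrt_sqrt; lra).
  assert (Hc0 : 0 < cbar).
  { assert (0 < q * S / (2*mu)). { apply Rdiv_pos_pos; nra. } unfold S in H; lra. }
  assert (H2 : q * S < 2 * cbar * mu).
  { assert (q * S / (2*mu) < cbar) by (unfold S; lra).
    apply (Rmult_lt_compat_r (2*mu)) in H; [|lra].
    replace (q * S / (2 * mu) * (2 * mu)) with (q*S) in H by (field; lra). lra. }
  assert (Hs1 : cbar - mu < s) by (unfold D in Hss; nra).
  assert (Hs2 : mu - cbar < s) by (unfold D in Hss; nra).
  assert (Hs3 : s < cbar + mu) by (unfold D in Hss; nra).
  set (a := theta1 mu sigma q cbar).
  set (b := theta2 mu sigma q cbar).
  set (t := theta2' mu sigma q cbar).
  assert (Ea : a = (cbar - mu + s)/S) by reflexivity.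
  assert (Eb : b = (cbar - mu - s)/S) by reflexivity.
  assert (Et : t = (1 - (cbar-mu)/s)/S) by (apply th2'; auto).
  assert (Ha : 0 < a) by (rewrite Ea; apply Rdiv_pos_pos; lra).
  assert (Hb : b < 0) by (rewrite Eb; apply Rdiv_neg_pos; lra).
  set (k := cbar * t / q).
  assert (Ht : 0 < t).
  { rewrite Et. apply Rdiv_pos_pos; auto.
    assert ((cbar-mu)/s < 1); [|lra]. apply (Rmult_lt_reg_r s); auto.
    replace ((cbar-mu)/s*s) with (cbar-mu) by (field; lra). lra. }
  assert (Hk : 0 < k) by (unfold k; apply Rdiv_pos_pos; nra).
  assert (Hkey : -(a*b)/q < k*(a-b)).
  { assert (E1 : -(a*b)/q = 2/S).
    { rewrite Ea, Eb. replace ((cbar - mu + s) / S * ((cbar - mu - s) / S)) with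
        (((cbar-mu)^2 - s*s)/(S*S)) by (field; lra). rewrite Hss. unfold D. field. split; lra. }
    assert (E2 : k*(a-b) = 2*cbar*(s - (cbar-mu))/(q*S*S)).
    { unfold k. rewrite Ea, Eb, Et. field. repeat split; lra. }
    rewrite E1, E2.
    assert (qS2 : 2*q*S = (s - (cbar-mu))*(s + (cbar-mu))) by (unfold D in Hss; nra).
    assert (q*S*2 < 2*cbar*(s-(cbar-mu))).
    { assert ((s - (cbar-mu))*(s + (cbar-mu)) < (s - (cbar-mu))*(2*cbar)) by (apply Rmult_lt_compat_l; lra).
      lra. }
    apply (Rmult_lt_reg_r (q*S*S)); [apply Rmult_lt_0_compat; [apply Rmult_lt_0_compat|]; lra|].
    replace (2/S*(q*S*S)) with (q*S*2) by (field; lra).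
    replace (2 * cbar * (s - (cbar - mu)) / (q * S * S) * (q * S * S)) with (2 * cbar * (s - (cbar - mu))) by (field; split; lra).
    lra. }
  assert (Hab : b < a) by lra.
  destruct (hh_shape a b q k Hq Ha Hb Hk Hkey) as [z [Hz [Ez [Hneg [Hpos Hh1]]]]].
  assert (Hdx : forall x, 0 < x -> dxb0 mu sigma q x cbar = hh a b q k x * PP a b x).
  { intros x Hx. apply (is_derive_unique (fun y => B0 a b q cbar t y)). apply d_B0; lra. }
  exists z. split; [auto|]. split.
  { rewrite Hdx, Ez by auto. ring. }
  split.
  { intros z' Hz' E. rewrite Hdx in E by auto.
    pose proof (PP_pos a b z' Hab ltac:(lra)).
    destruct (Rtotal_order z' z) as [Hl|[Hl|Hl]]; auto.
    - specialize (Hneg z' ltac:(lra)). nra.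
    - specialize (Hpos z' Hl). nra. }
  split.
  { intros x Hx. rewrite Hdx by lra. pose proof (PP_pos a b x Hab ltac:(lra)).
    specialize (Hneg x Hx). nra. }
  split.
  { exists (h2 a b q (cbar*t/q) 0 / 2 * (exp (a*0+b*0) * / (a-b)^2)). split.
    - assert (h2 a b q k 0 < 0).
      { pose proof (uu_h2 a b q k Hq 0) as E. rewrite Rmult_0_r, exp_0, Rmult_1_r in E.
        rewrite <- E. apply uu0; auto. }
      assert (0 < exp (a*0+b*0) * / (a-b)^2).
      { apply Rmult_lt_0_compat. apply exp_pos. apply Rinv_0_lt_compat, pow2_gt_0; lra. }
      fold k. nra.
    - exact (lim_B0 a b q cbar t Hq Ha Hb). }
  split.
  { intros x Hx. rewrite Hdx by lra. pose proof (PP_pos a b x Hab ltac:(lra)).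
    specialize (Hpos x Hx). nra. }
  unfold dxxb0. change (Derive_n (fun y => B0 a b q cbar t y) 2 z > 0).
  rewrite D2_B0 by auto.
  pose proof (PP_pos a b z Hab ltac:(lra)). fold k. apply Rmult_lt_0_compat; auto.
Qed.
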